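(* Let $X\subseteq\mathbb{C}(\mathbb{Z})$ admit a reproducing filter $\phi\in\mathbb{C}_m(\mathbb{Z})$ with $\|\phi\|_2\le\mathsf{R}/\sqrt{2m+1}$. Then for every integer $k\ge2$, the $k$-fold convolution power $\phi^k=\phi*\cdots*\phi\in\mathbb{C}_{km}(\mathbb{Z})$ is also reproducing for $X$, and $$\|\phi^k\|_2\le\|\mathcal{F}_{km}[\phi^k]\|_1\le\frac{c_k\mathsf{R}^k}{\sqrt{2km+1}},$$ where the constants $c_k$ depend only on $k$ and satisfy $c_k=2^{k-1}$ for $k=2^p$, $c_{2k+1}\le3\sqrt{2k+1}\,c_k^2$ for $k\in\mathbb{N}$ (with $c_1=1$), and $\log(c_k)=O(k\log k)$.
   Context: $\mathbb{C}(\mathbb{Z})$: two-sided complex sequences; $\mathbb{C}_p(\mathbb{Z})$: those with $x_t=0$ for $|t|>p$. Convolution $(u*v)_t=\sum_\tau u_\tau v_{t-\tau}$; $\phi$ reproduces $X$ if $\phi*x=x$ for all $x\in X$. $\|\cdot\|_2$ on sequences is the $\ell_2$-norm. DFT $(\mathcal{F}_p[u])_k=(2p+1)^{-1/2}\sum_{|\tau|\le p}\exp(-i2\pi k\tau/(2p+1))u_\tau$, $k=0,\dots,2p$. *)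

(* Defs.v *)
From HB Require Import structures.
From mathcomp Require Import all_boot all_order all_algebra.
From mathcomp Require Import complex.
From mathcomp Require Import all_classical all_reals.
From mathcomp Require Import trigo.
Set Implicit Arguments. Unset Strict Implicit. Unset Printing Implicit Defensive.
Import Order.TTheory GRing.Theory Num.Theory.
Local Open Scope ring_scope.

Section Defs.
Variable R : realType.

Definition cseq := int -> R[i].

Definition cmod (z : R[i]) : R := Num.sqrt (complex.Re z ^+ 2 + complex.Im z ^+ 2).

Definition in_Cp (p : nat) (x : cseq) : Prop :=
  forall t : int, (p%:Z < `|t|)%R -> x t = 0.

(* sum over the window |tau| <= p, tau = i - p for i < 2p+1 *)
Definition wsum (p : nat) (f : int -> R[i]) : R[i] :=
  \sum_(i < (2 * p).+1) f (i%:Z - p%:Z).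
Definition wsumR (p : nat) (f : int -> R) : R :=
  \sum_(i < (2 * p).+1) f (i%:Z - p%:Z).

(* convolution (u * v)_t = sum_tau u_tau v_(t - tau), for u in C_p(Z)
   (the sum is then exactly the sum over |tau| <= p) *)
Definition conv (p : nat) (u v : cseq) : cseq :=
  fun t => wsum p (fun tau => u tau * v (t - tau)).

Definition reproduces (p : nat) (phi : cseq) (X : cseq -> Prop) : Prop :=
  forall x, X x -> conv p phi x = x.

Fixpoint cpow (m : nat) (phi : cseq) (k : nat) : cseq :=
  match k with
  | 0 => phi
  | 1 => phi
  | k'.+1 => conv m phi (cpow m phi k')
  end.

Definition l2norm (p : nat) (x : cseq) : R :=
  Num.sqrt (wsumR p (fun t => cmod (x t) ^+ 2)).

Definition expmi (theta : R) : R[i] := Complex (cos theta) (- sin theta).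

Definition dft (p : nat) (u : cseq) (k : nat) : R[i] :=
  (((Num.sqrt ((2 * p).+1%:R : R))^-1)%:C)%C *
  wsum p (fun tau => expmi (2 * pi * k%:R * tau%:~R / ((2 * p).+1)%:R) * u tau).

Definition dft_l1 (p : nat) (u : cseq) : R :=
  \sum_(k < (2 * p).+1) cmod (dft p u k).

End Defs.

(* Main.v *)
Require Import Defs.
From HB Require Import structures.
From mathcomp Require Import all_boot all_order all_algebra.
From mathcomp Require Import complex.
From mathcomp Require Import all_classical all_reals.
From mathcomp Require Import exp trigo.
From mathcomp Require Import zify ring lra.
Import Order.TTheory GRing.Theory Num.Theory.
Local Open Scope ring_scope.
Section Win.
Variable R : realType.
Local Notation C := (R[i]).

Lemma big_window (g : nat -> C) n a l : (a + l <= n)%N ->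
  (forall i, (i < a)%N -> g i = 0) -> (forall i, (a + l <= i)%N -> g i = 0) ->
  \sum_(i < n) g i = \sum_(i < l) g (a + i)%N.
Proof.
move=> hn h1 h2.
have han : (a <= n)%N by apply: leq_trans (leq_addr l a) hn.
rewrite -(big_mkord xpredT) (big_cat_nat (n := a)) //=.
rewrite [X in _ + X](big_cat_nat (n := a + l)) ?leq_addr //=.
rewrite big_nat_cond big1 ?add0r; last first.
  move=> i hh; apply: h1. by move: hh; rewrite andbT => /andP[].
rewrite [X in _ + X]big_nat_cond [X in _ + X]big1 ?addr0; last first.
  move=> i hh; apply: h2. by move: hh; rewrite andbT => /andP[].
rewrite -{1}(add0n a) big_addn addKn big_mkord.
by apply: eq_bigr => i _; rewrite addnC.
Qed.

Lemma wsum_shift (f : int -> C) (p d : nat) (tau : int) :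
  in_Cp p f -> `|tau| <= d%:Z ->
  wsum (p + d) (fun t => f (t - tau)) = wsum p f.
Proof.
move=> hf ht; rewrite /wsum.
have ha : (0 <= d%:Z + tau) by lia.
pose a := absz (d%:Z + tau).
have aE : a%:Z = d%:Z + tau by rewrite /a gez0_abs.
rewrite (big_window (fun i : nat => f (i%:Z - (p + d)%N%:Z - tau)) _ a (2 * p).+1).
- by apply: eq_bigr => i _; congr f; rewrite PoszD aE; lia.
- lia.
- move=> i hi; apply: hf; lia.
- move=> i hi; apply: hf; lia.
Qed.

Lemma wsum_ext (f : int -> C) (p P : nat) : in_Cp p f -> (p <= P)%N -> wsum P f = wsum p f.
Proof.
move=> hf hP; rewrite -(subnKC hP) -(@wsum_shift f p (P - p) 0 hf) //.
by apply: eq_bigr => i _; rewrite subr0.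
Qed.


Lemma conv_Cp (m q : nat) (phi v : cseq R) :
  in_Cp q v -> in_Cp (m + q) (conv m phi v).
Proof.
move=> hv t ht; rewrite /conv /wsum big1 // => i _.
rewrite hv ?mulr0 //; have := ltn_ord i; lia.
Qed.

Lemma conv_assoc (m q : nat) (phi v x : cseq R) :
  in_Cp q v -> conv (m + q) (conv m phi v) x = conv m phi (conv q v x).
Proof.
move=> hv; apply: boolp.funext => t.
rewrite /conv {1}/wsum.
under eq_bigr do rewrite /wsum mulr_suml.
rewrite exchange_big /=; apply: eq_bigr => j _.
under eq_bigr do rewrite -mulrA.
rewrite -mulr_sumr; congr (_ * _).
pose tau : int := j%:Z - m%:Z.
have htau : `|tau| <= m%:Z by have := ltn_ord j; rewrite /tau; lia.
have hh : in_Cp q (fun s => v s * x (t - tau - s)).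
  by move=> s hs; rewrite hv ?mul0r.
rewrite -(wsum_shift _ _ _ _ hh htau) addnC /wsum.
by apply: eq_bigr => i _; rewrite /tau; congr (_ * x _); ring.
Qed.

Lemma cpowS (m : nat) (phi : cseq R) k : (0 < k)%N ->
  cpow m phi k.+1 = conv m phi (cpow m phi k).
Proof. by case: k. Qed.

Lemma cpow_Cp (m : nat) (phi : cseq R) k : in_Cp m phi -> (0 < k)%N ->
  in_Cp (k * m) (cpow m phi k).
Proof.
move=> hp; elim: k => [//|[|k] IH] _; first by rewrite mul1n.
by rewrite cpowS // mulSn; apply: conv_Cp; apply: IH.
Qed.

Lemma cpow_rep (m : nat) (phi : cseq R) X k : in_Cp m phi -> reproduces m phi X ->
  (0 < k)%N -> reproduces (k * m) (cpow m phi k) X.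
Proof.
move=> hp hr; elim: k => [//|[|k] IH] _; first by rewrite mul1n.
move=> x hx; rewrite cpowS // mulSn conv_assoc; last exact: cpow_Cp.
by rewrite IH // hr.
Qed.


Lemma expmiD (a b : R) : expmi (a + b) = expmi a * expmi b.
Proof. by rewrite /expmi cosD sinD; simpc; congr (Complex _ _); ring. Qed.

Lemma expmi0 : expmi (0 : R) = 1.
Proof. by rewrite /expmi cos0 sin0 oppr0. Qed.

Lemma expmiJ (a : R) : (expmi a)^*%C = expmi (- a).
Proof. by rewrite /expmi /= cosN sinN !opprK. Qed.

Lemma expmiX (a : R) n : expmi a ^+ n = expmi (a *+ n).
Proof.
elim: n => [|n IH]; first by rewrite expr0 mulr0n expmi0.
by rewrite exprS IH mulrS expmiD.
Qed.

Lemma cmod_expmi (a : R) : cmod (expmi a) = 1.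
Proof. by rewrite /cmod /= sqrrN cos2Dsin2 sqrtr1. Qed.

Lemma expmi_2pi : expmi (2 * pi : R) = 1.
Proof.
have -> : 2 * pi = pi *+ 2 :> R by rewrite mulr_natl.
by rewrite /expmi cos2pi sin2pi oppr0.
Qed.

Lemma expmi_2pi_int (n : int) : expmi (2 * pi * n%:~R : R) = 1.
Proof.
case: n => n.
  have -> : (n%:Z)%:~R = n%:R :> R by [].
  by rewrite mulr_natr -expmiX expmi_2pi expr1n.
rewrite NegzE intrN mulrN -expmiJ.
have -> : (n.+1%:Z)%:~R = n.+1%:R :> R by [].
by rewrite mulr_natr -expmiX expmi_2pi expr1n conjc1.
Qed.

Lemma sin_ne0 (y : R) : 0 < `|y| < pi -> sin y != 0.
Proof.
move=> /andP[h1 h2].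
case: (ltrgt0P y) => hy.
- by rewrite gt_eqF // sin_gt0_pi // hy /= -(gtr0_norm hy).
- rewrite lt_eqF //; rewrite -(opprK y) sinN oppr_lt0 sin_gt0_pi //.
  by rewrite -(ltr0_norm hy) h1 h2.
- by move: h1; rewrite hy normr0 ltxx.
Qed.

Lemma expmi_ne1 (N : nat) (n : int) : n != 0 -> `|n| < N%:Z ->
  expmi (2 * pi * n%:~R / N%:R : R) != 1.
Proof.
move=> hn hN; apply/eqP => /(congr1 (@complex.Re R)) /= hc.
set y := pi * n%:~R / N%:R : R.
have hx : 2 * pi * n%:~R / N%:R = y *+ 2 by rewrite /y mulr_natl; ring.
move: hc; rewrite hx cos_mulr2n => hc.
have hc2 : cos y ^+ 2 = 1 by move: hc; rewrite -mulr_natr; lra.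
have : sin y ^+ 2 = 0 by rewrite sin2cos2 hc2 subrr.
move/eqP; rewrite expf_eq0 /= => /eqP hs.
have hN0 : (0 < N)%N by lia.
have hNr : (0 : R) < N%:R by rewrite ltr0n.
move: (@sin_ne0 y); rewrite hs eqxx => /implyP; rewrite implybF negb_and -!leNgt.
have hn1 : (1 : R) <= `|n%:~R| by rewrite -intr_norm ler1z; lia.
have hn2 : `|n%:~R| < (N%:R : R) by rewrite -intr_norm -[N%:R]/((N%:Z)%:~R) ltr_int.
have hpi := pi_gt0 R.
have hyE : `|y| = pi * (`|n%:~R| / N%:R).
  by rewrite /y !normrM normfV (ger0_norm (pi_ge0 R)) (ger0_norm (ltW hNr)) mulrA.
have h1 : 0 < `|n%:~R| / (N%:R : R) by rewrite divr_gt0 //; lra.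
have h2 : `|n%:~R| / (N%:R : R) < 1 by rewrite ltr_pdivrMr // mul1r.
have h3 := mulr_gt0 hpi h1.
have h4 : pi * (`|n%:~R| / (N%:R : R)) < pi by rewrite gtr_pMr.
by rewrite hyE; case/orP; rewrite leNgt ?h3 ?h4.
Qed.


Lemma orth (N : nat) (n : int) : (0 < N)%N -> `|n| < N%:Z ->
  \sum_(j < N) expmi (2 * pi * j%:R * n%:~R / N%:R : R) = (n == 0)%:R * N%:R.
Proof.
move=> hN hn.
have [n0|n0] := eqVneq n 0.
  rewrite n0 mul1r.
  under eq_bigr do rewrite mulr0 mul0r expmi0.
  by rewrite sumr_const card_ord.
set w := expmi (2 * pi * n%:~R / N%:R : R).
have hterm (j : nat) : expmi (2 * pi * j%:R * n%:~R / N%:R : R) = w ^+ j.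
  by rewrite /w expmiX -mulr_natl; congr expmi; ring.
under eq_bigr do rewrite hterm.
rewrite mul0r.
have hN' : (N%:R : R) != 0 by rewrite pnatr_eq0 -lt0n.
have : (w - 1) * \sum_(i < N) w ^+ i = 0.
  rewrite -subrX1 /w expmiX.
  have -> : (2 * pi * n%:~R / N%:R : R) *+ N = 2 * pi * n%:~R.
    by rewrite -(mulr_natr (2 * pi * n%:~R / N%:R : R) N) divfK.
  by rewrite expmi_2pi_int subrr.
move/eqP; rewrite mulf_eq0 subr_eq0 (negbTE (@expmi_ne1 N n n0 hn)) /=.
by move/eqP.
Qed.


Definition Sft (p N : nat) (u : cseq R) (j : nat) : C :=
  wsum p (fun tau => expmi (2 * pi * j%:R * tau%:~R / N%:R) * u tau).

Lemma expmi_pair (a b : R) (x y : C) :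
  (expmi a * x) * (expmi b * y)^*%C = x * y^*%C * expmi (a - b).
Proof.
have cM : forall x y : C, conjc (x * y) = conjc x * conjc y.
  by move=> [a1 b1] [a2 b2] /=; congr (Complex _ _); ring.
by rewrite cM expmiJ expmiD; ring.
Qed.

Lemma parseval (p N : nat) (u : cseq R) : ((2 * p).+1 <= N)%N ->
  \sum_(j < N) Sft p N u j * (Sft p N u j)^*%C =
  N%:R * wsum p (fun t => u t * (u t)^*%C).
Proof.
move=> hN; rewrite /Sft /wsum.
under eq_bigr do rewrite rmorph_sum mulr_suml.
under eq_bigr do under eq_bigr do rewrite mulr_sumr.
rewrite exchange_big /=; under eq_bigr do rewrite exchange_big /=.
rewrite mulr_sumr; apply: eq_bigr => i1 _.
under eq_bigr do under eq_bigr do rewrite expmi_pair.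
under eq_bigr do rewrite -mulr_sumr.
have hterm (i2 : 'I_(2 * p).+1) (j : 'I_N) :
   2 * pi * j%:R * (i1%:Z - p%:Z)%:~R / N%:R -
   2 * pi * j%:R * (i2%:Z - p%:Z)%:~R / N%:R
   = 2 * pi * j%:R * (i1%:Z - i2%:Z)%:~R / N%:R :> R.
  by rewrite !intrB; ring.
under eq_bigr do under eq_bigr do rewrite hterm.
have hN0 : (0 < N)%N by lia.
have hlt (i2 : 'I_(2 * p).+1) : `|i1%:Z - i2%:Z| < N%:Z.
  by have := ltn_ord i1; have := ltn_ord i2; lia.
under eq_bigr => i2 _ do rewrite (@orth N _ hN0 (hlt i2)).
rewrite (bigD1 i1) //= subrr eqxx mul1r big1 ?addr0; first by ring.
move=> i2 hne; suff -> : (i1%:Z - i2%:Z == 0) = false by rewrite mul0r mulr0.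
apply/negbTE/eqP => h; move/negP: hne; apply; apply/eqP/val_inj => /=; lia.
Qed.


Lemma Sft_conv (m q N : nat) (phi v : cseq R) (j : nat) : in_Cp q v ->
  Sft (m + q) N (conv m phi v) j = Sft m N phi j * Sft q N v j.
Proof.
move=> hv; rewrite /Sft /conv.
set th := 2 * pi * j%:R / N%:R : R.
have he (t : int) : expmi (2 * pi * j%:R * t%:~R / N%:R) = expmi (th * t%:~R).
  by congr expmi; rewrite /th; ring.
rewrite {1}/wsum; under eq_bigr do rewrite he /wsum mulr_sumr.
rewrite exchange_big /= [X in _ = X * _]/wsum mulr_suml.
apply: eq_bigr => jj _.
set tau : int := jj%:Z - m%:Z.
have htau : `|tau| <= m%:Z by have := ltn_ord jj; rewrite /tau; lia.
have hh : in_Cp q (fun s => expmi (2 * pi * j%:R * s%:~R / N%:R) * v s).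
  by move=> s hs; rewrite hv ?mulr0.
rewrite -(wsum_shift _ _ _ _ hh htau) (addnC q m) /wsum mulr_sumr.
apply: eq_bigr => i _.
have key (t : int) : expmi (th * t%:~R) * (phi tau * v (t - tau)) =
    expmi (th * tau%:~R) * phi tau * (expmi (th * (t - tau)%:~R) * v (t - tau)).
  have -> : th * t%:~R = th * tau%:~R + th * (t - tau)%:~R by rewrite intrB; ring.
  by rewrite expmiD; ring.
by rewrite !he key.
Qed.

Lemma Sft_cpow (m N : nat) (phi : cseq R) (j k : nat) : in_Cp m phi -> (0 < k)%N ->
  Sft (k * m) N (cpow m phi k) j = Sft m N phi j ^+ k.
Proof.
move=> hp; elim: k => [//|[|k] IH] _; first by rewrite mul1n expr1.
by rewrite cpowS // mulSn Sft_conv ?IH ?exprS //; apply: cpow_Cp.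
Qed.

Local Open Scope complex_scope.

Lemma cmodC (z : C) : (cmod z)%:C = `|z|.
Proof. by rewrite normc_def. Qed.

Lemma cmod_ge0 (z : C) : 0 <= cmod z.
Proof. exact: sqrtr_ge0. Qed.

Lemma cmodM (a b : C) : cmod (a * b) = cmod a * cmod b.
Proof. by apply: complexI; rewrite rmorphM /= !cmodC normrM. Qed.

Lemma cmodX (a : C) n : cmod (a ^+ n) = cmod a ^+ n.
Proof. by apply: complexI; rewrite rmorphXn /= !cmodC normrX. Qed.

Lemma cmod_sqr (z : C) : (cmod z ^+ 2)%:C = z * z^*%C.
Proof. by rewrite rmorphXn /= cmodC sqr_normc. Qed.

Lemma cmod_real (x : R) : cmod (x%:C) = `|x|.
Proof. by rewrite /cmod /= expr0n /= addr0 sqrtr_sqr. Qed.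

Lemma cmod_sum n (f : 'I_n -> C) : cmod (\sum_(i < n) f i) <= \sum_(i < n) cmod (f i).
Proof.
rewrite -lecR cmodC rmorph_sum /=.
under [X in _ <= X]eq_bigr do rewrite cmodC.
exact: ler_norm_sum.
Qed.

Lemma le_term_sum n (a : 'I_n -> R) i : (forall j, 0 <= a j) -> a i <= \sum_(j < n) a j.
Proof. by move=> h; rewrite (bigD1 i) //= lerDl sumr_ge0. Qed.

Lemma sqrt_sum_le n (a : 'I_n -> R) : (forall j, 0 <= a j) ->
  Num.sqrt (\sum_(j < n) a j ^+ 2) <= \sum_(j < n) a j.
Proof.
move=> h; have hA : 0 <= \sum_(j < n) a j by apply: sumr_ge0.
rewrite -(ger0_norm hA) -sqrtr_sqr ler_sqrt ?sqr_ge0 //.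
rewrite [X in _ <= X]expr2 mulr_suml; apply: ler_sum => i _.
by rewrite expr2 ler_wpM2l // le_term_sum.
Qed.

Lemma cauchy_schwarz n (a : 'I_n -> R) :
  (\sum_(j < n) a j) ^+ 2 <= n%:R * \sum_(j < n) a j ^+ 2.
Proof.
have h2 : 2 * (\sum_(j < n) a j) ^+ 2 <=
    \sum_(i < n) \sum_(j < n) (a i ^+ 2 + a j ^+ 2).
  rewrite expr2 mulr_suml mulr_sumr; apply: ler_sum => i _.
  rewrite mulr_sumr mulr_sumr; apply: ler_sum => j _.
  have := sqr_ge0 (a i - a j); rewrite sqrrB; lra.
have hE : \sum_(i < n) \sum_(j < n) (a i ^+ 2 + a j ^+ 2) =
    2 * (n%:R * \sum_(j < n) a j ^+ 2).
  under eq_bigr do rewrite big_split /= sumr_const card_ord.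
  rewrite big_split /= sumr_const card_ord -sumrMnl.
  under eq_bigr do rewrite -mulr_natr.
  under [X in _ + X]eq_bigr do rewrite -mulr_natr.
  rewrite -!mulr_suml; ring.
lra.
Qed.

Lemma sum_le_sqrt n (a : 'I_n -> R) :
  \sum_(j < n) a j <= Num.sqrt (n%:R) * Num.sqrt (\sum_(j < n) a j ^+ 2).
Proof.
rewrite -sqrtrM ?ler0n // (le_trans (ler_norm _)) //.
by rewrite -sqrtr_sqr ler_sqrt ?cauchy_schwarz // mulr_ge0 ?ler0n ?sumr_ge0 // => i _; apply: sqr_ge0.
Qed.

Local Open Scope complex_scope.

Lemma parR (p N : nat) (u : cseq R) : ((2 * p).+1 <= N)%N ->
  \sum_(j < N) cmod (Sft p N u j) ^+ 2 = N%:R * wsumR p (fun t => cmod (u t) ^+ 2).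
Proof.
move=> hN; apply: complexI; rewrite rmorph_sum rmorphM /= /wsumR rmorph_sum /=.
under eq_bigr do rewrite cmod_sqr.
rewrite parseval // rmorph_nat; congr (_ * _).
by rewrite /wsum; apply: eq_bigr => i _; rewrite cmod_sqr.
Qed.

Lemma dftE (p : nat) (u : cseq R) j :
  dft p u j = ((Num.sqrt ((2 * p).+1%:R : R))^-1)%:C * Sft p (2 * p).+1 u j.
Proof. by []. Qed.

Lemma cmod_dft (p : nat) (u : cseq R) j :
  cmod (dft p u j) = (Num.sqrt ((2 * p).+1%:R : R))^-1 * cmod (Sft p (2 * p).+1 u j).
Proof. by rewrite dftE cmodM cmod_real ger0_norm // invr_ge0 sqrtr_ge0. Qed.

Lemma l2_le_dft (p : nat) (u : cseq R) : l2norm p u <= dft_l1 p u.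
Proof.
have key : \sum_(j < (2 * p).+1) cmod (dft p u j) ^+ 2 = wsumR p (fun t => cmod (u t) ^+ 2).
  under eq_bigr do rewrite cmod_dft exprMn.
  rewrite -mulr_sumr parR // mulrA exprVn sqr_sqrtr ?ler0n // mulVf ?mul1r //.
  by rewrite pnatr_eq0.
rewrite /l2norm -key /dft_l1; apply: sqrt_sum_le => j; exact: cmod_ge0.
Qed.


Lemma nat_bound (k m : nat) : ((2 * (k.+2 * m)).+1 <= 2 ^ k.+1 * (2 * m).+1)%N.
Proof.
have h := ltn_expl k.+1 (isT : (1 < 2)%N).
set e := (2 ^ k.+1)%N in h *; nia.
Qed.

Lemma dft_bound (m : nat) (phi : cseq R) (Rb : R) (k : nat) :
  in_Cp m phi -> l2norm m phi <= Rb / Num.sqrt ((2 * m).+1%:R) -> (2 <= k)%N ->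
  dft_l1 (k * m) (cpow m phi k)
    <= 2 ^+ k.-1 * Rb ^+ k / Num.sqrt ((2 * (k * m)).+1%:R).
Proof.
move=> hp hl; case: k => [|[|k]] // _.
set N := (2 * (k.+2 * m)).+1.
set M := (2 * m).+1.
have hN : (0 : R) < Num.sqrt N%:R by rewrite sqrtr_gt0 ltr0n.
have hM : (0 : R) < Num.sqrt M%:R by rewrite sqrtr_gt0 ltr0n.
have hl0 : 0 <= l2norm m phi by apply: sqrtr_ge0.
have Rb0 : 0 <= Rb.
  by move: (le_trans hl0 hl); rewrite ler_pdivlMr // mul0r.
have hx0 j : 0 <= cmod (Sft m N phi j) by apply: cmod_ge0.
have A1 j : cmod (Sft m N phi j) <= Rb.
  apply: (le_trans (cmod_sum _ _)).
  under eq_bigr do rewrite cmodM cmod_expmi mul1r.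
  apply: (le_trans (sum_le_sqrt _ _)).
  rewrite -/M -/(wsumR m (fun t => cmod (phi t) ^+ 2)) -/(l2norm m phi).
  by rewrite -ler_pdivlMl // mulrC.
have W : wsumR m (fun t => cmod (phi t) ^+ 2) <= Rb ^+ 2 / M%:R.
  have -> : wsumR m (fun t => cmod (phi t) ^+ 2) = l2norm m phi ^+ 2.
    by rewrite sqr_sqrtr // sumr_ge0 // => i _; apply: sqr_ge0.
  have -> : Rb ^+ 2 / M%:R = (Rb / Num.sqrt M%:R) ^+ 2.
    by rewrite exprMn exprVn sqr_sqrtr ?ler0n.
  by apply: lerXn2r; rewrite // nnegrE // divr_ge0 // ltW.
rewrite /dft_l1.
under eq_bigr do rewrite cmod_dft Sft_cpow // cmodX.
set s := (Num.sqrt N%:R)^-1.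
have hs : 0 <= s by rewrite invr_ge0 ltW.
apply: (le_trans (y := \sum_(j < N) s * (Rb ^+ k * cmod (Sft m N phi j) ^+ 2))).
  apply: ler_sum => j _; apply: ler_wpM2l => //.
  have -> : cmod (Sft m N phi j) ^+ k.+2 = cmod (Sft m N phi j) ^+ k * cmod (Sft m N phi j) ^+ 2.
    by rewrite -exprD addn2.
  rewrite ler_wpM2r ?sqr_ge0 //.
  by apply: lerXn2r; rewrite // nnegrE.
rewrite -mulr_sumr -mulr_sumr parR; last by rewrite /N; nia.
have hb : (N%:R : R) / M%:R <= 2 ^+ k.+1.
  rewrite ler_pdivrMr ?ltr0n // -natrX -natrM ler_nat; exact: nat_bound.
have hW : (N%:R : R) * wsumR m (fun t => cmod (phi t) ^+ 2) <= Rb ^+ 2 * 2 ^+ k.+1.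
  apply: (le_trans (ler_wpM2l (ler0n _ _) W)).
  by rewrite mulrCA; apply: ler_wpM2l => //; apply: sqr_ge0.
have -> : Rb ^+ k.+2 = Rb ^+ k * Rb ^+ 2 by rewrite -exprD addn2.
rewrite [X in _ <= X]mulrC /=; apply: ler_wpM2l => //.
rewrite [X in _ <= X]mulrCA; apply: ler_wpM2l; first exact: exprn_ge0.
by rewrite [X in _ <= X]mulrC.
Qed.

End Win.

Theorem proposition9 (R : realType) :
  exists c : nat -> R,
    [/\ (forall k : nat, (1 <= k)%N -> 0 < c k),
        c 1%N = 1,
        (forall p : nat, c (2 ^ p)%N = 2 ^+ (2 ^ p).-1),
        (forall k : nat,
            c (2 * k).+1 <= 3 * Num.sqrt ((2 * k).+1%:R) * c k ^+ 2)
      & (exists (C : R) (K : nat), forall k : nat, (K <= k)%N ->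
            `|ln (c k)| <= C * k%:R * ln (k%:R))] /\
    forall (X : cseq R -> Prop) (m : nat) (phi : cseq R) (Rb : R),
      in_Cp m phi ->
      reproduces m phi X ->
      l2norm m phi <= Rb / Num.sqrt ((2 * m).+1%:R) ->
      forall k : nat, (2 <= k)%N ->
        [/\ in_Cp (k * m) (cpow m phi k),
            reproduces (k * m) (cpow m phi k) X,
            l2norm (k * m) (cpow m phi k) <= dft_l1 (k * m) (cpow m phi k)
          & dft_l1 (k * m) (cpow m phi k)
              <= c k * Rb ^+ k / Num.sqrt ((2 * (k * m)).+1%:R)].
Proof.
exists (fun k => 2 ^+ k.-1); split.
  split.
  - by move=> k _; apply: exprn_gt0.
  - by rewrite expr0.
  - by [].
  - case=> [|k].
      by rewrite /= expr0 expr1n mulr1 sqrtr1 mulr1 ler1n.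
    have -> : (2 * k.+1).+1.-1 = (k + k).+2 by rewrite /=; lia.
    rewrite /= -exprM muln2 -addnn !exprS mulrA.
    apply: ler_wpM2r; first exact: exprn_ge0.
    have hy : (3 : R) <= (2 * k.+1).+1%:R by rewrite (ler_nat R 3); lia.
    have ht0 : 0 <= Num.sqrt ((2 * k.+1).+1%:R : R) by apply: sqrtr_ge0.
    have ht2 : Num.sqrt ((2 * k.+1).+1%:R : R) ^+ 2 = (2 * k.+1).+1%:R.
      by rewrite sqr_sqrtr // ler0n.
    move: ht0 ht2 hy; set t := Num.sqrt _; set y := _%:R => ht0 ht2 hy.
    rewrite expr2 in ht2; nra.
  - exists 1, 2%N => k hk.
    have hk1 : (2 : R) <= k%:R by rewrite (ler_nat R 2 k).
    have hl2 : 0 <= ln (2 : R) by apply: ln_ge0; lra.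
    have hlk : ln (2 : R) <= ln k%:R.
      by rewrite ler_ln // posrE; lra.
    rewrite lnXn // ger0_norm ?mulrn_wge0 // mul1r -(mulr_natl (ln (2 : R)) k.-1).
    apply: ler_pM => //; rewrite ler_nat; lia.
move=> X m phi Rb hp hr hl k hk.
have hk0 : (0 < k)%N by lia.
split.
- exact: cpow_Cp.
- exact: cpow_rep.
- exact: l2_le_dft.
- exact: dft_bound.
Qed.
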